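(* Suppose users bid their true costs and let $\alpha\ge1$. Let $g_{avg}(\pi)$ denote the expected utility $\mathbb{E}_{\mathbf{Y}_{\mathcal{W}}}[g(\mathbf{y}_{\mathcal{S}})]$ of the set selected by an adaptive policy $\pi$, let $\pi_G$ be the allocation policy of \textsc{SeqGreedy} and $\pi_{TG}$ the allocation policy of \textsc{SeqTGreedy} with parameter $\alpha$ (both defined in the context). Then $g_{avg}(\pi_G)\le(1+\alpha)\,g_{avg}(\pi_{TG})+\alpha f_{\max}$.
   Context: Setting. $\mathcal{V}$ is a finite set and $f:2^{\mathcal{V}}\to\mathbb{R}_{\ge0}$ is monotone and submodular. $\mathcal{W}$ is a finite set of users and $\mathcal{O}\subseteq 2^{\mathcal{V}}$. Each user $w$ has a random sensing profile $Y_w$ with values in $\mathcal{O}$; the $Y_w$ are independent with known distributions. For $\mathcal{S}\subseteq\mathcal{W}$ and values $y_s$, write $\mathbf{y}_{\mathcal{S}}=\{(s,y_s):s\in\mathcal{S}\}$ and $g(\mathbf{y}_{\mathcal{S}})=f(\bigcup_{s\in\mathcal{S}}y_s)$. Each user's maximal contribution is bounded by $f_{\max}$: $g(\mathbf{y}_{\mathcal{S}}\cup\{(w,y)\})-g(\mathbf{y}_{\mathcal{S}})\le f_{\max}$ always. The conditional expected marginal gain is $\Delta_g(w\mid\mathbf{y}_{\mathcal{S}})=\sum_{y\in\mathcal{O}}P(Y_w=y\mid\mathbf{y}_{\mathcal{S}})\,[g(\mathbf{y}_{\mathcal{S}}\cup\{(w,y)\})-g(\mathbf{y}_{\mathcal{S}})]$.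 Each user $w$ has cost $c_w>0$ and bid $b_w=c_w$; budget $\mathcal{B}>0$. Allocation policy of \textsc{SeqTGreedy} (parameter $\alpha$). Set $\mathcal{S}=\emptyset$, $\mathbf{y}_{\mathcal{S}}=\emptyset$, $\mathcal{W}'=\mathcal{W}$. While $\mathcal{W}'\ne\emptyset$: let $w^*\in\arg\max_{w\in\mathcal{W}'}\Delta_g(w\mid\mathbf{y}_{\mathcal{S}})/b_w$ and $\Delta_{w^*}=\Delta_g(w^*\mid\mathbf{y}_{\mathcal{S}})$. If $\sum_{s\in\mathcal{S}}b_s+b_{w^*}\le\mathcal{B}$: if moreover $b_{w^*}\le\frac{\mathcal{B}}{\alpha}\cdot\frac{\Delta_{w^*}}{\sum_{s\in\mathcal{S}}\Delta_s+\Delta_{w^*}}$ then add $w^*$ to $\mathcal{S}$, observe the realization $y_{w^*}$ of $Y_{w^*}$, add $(w^*,y_{w^*})$ to $\mathbf{y}_{\mathcal{S}}$, remove $w^*$ from $\mathcal{W}'$; otherwise stop. If the budget test fails, remove $w^*$ from $\mathcal{W}'$. \textsc{SeqGreedy}: the same policy without the proportional-share test, i.e. repeatedly choose $w^*\in\arg\max\Delta_g(w\mid\mathbf{y}_{\mathcal{S}})/b_w$ among remaining users, select it (and observe its profile) if the total bid stays within $\mathcal{B}$, otherwise discard it. *)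

(* Defs.v *)
From mathcomp Require Import all_boot all_order all_algebra.
Set Implicit Arguments. Unset Strict Implicit. Unset Printing Implicit Defensive.
Import Order.TTheory GRing.Theory Num.Theory.
Local Open Scope ring_scope.

(* A full realization of the sensing profiles is phi : {ffun W -> {set V}},
   phi w being the realized profile Y_w of user w.  The profiles are
   independent with distributions p w, so the joint law is the product. *)
Definition jointP {V W : finType} {R : realFieldType}
  (p : W -> {set V} -> R) (phi : {ffun W -> {set V}}) : R :=
  \prod_(w : W) p w (phi w).

Definition agree {V W : finType} (S : {set W}) (phi psi : {ffun W -> {set V}}) : bool :=
  [forall s in S, psi s == phi s].

(* P(Y_w = y | y_S), where y_S = {(s, phi s) : s in S} *)
Definition condP {V W : finType} {R : realFieldType}
  (p : W -> {set V} -> R) (w : W) (y : {set V}) (S : {set W})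
  (phi : {ffun W -> {set V}}) : R :=
  (\sum_(psi | agree S phi psi && (psi w == y)) jointP p psi)
  / (\sum_(psi | agree S phi psi) jointP p psi).

Definition gval {V W : finType} {R : realFieldType} (f : {set V} -> R)
  (S : {set W}) (phi : {ffun W -> {set V}}) : R :=
  f (\bigcup_(s in S) phi s).

Definition Delta {V W : finType} {R : realFieldType} (f : {set V} -> R)
  (O : {set {set V}}) (p : W -> {set V} -> R) (w : W) (S : {set W})
  (phi : {ffun W -> {set V}}) : R :=
  \sum_(y in O) condP p w y S phi *
     (f ((\bigcup_(s in S) phi s) :|: y) - gval f S phi).

Definition monotone_set {V : finType} {R : realFieldType} (f : {set V} -> R) :=
  forall A B : {set V}, A \subset B -> f A <= f B.

Definition submodular_set {V : finType} {R : realFieldType} (f : {set V} -> R) :=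
  forall (A B : {set V}) (x : V), A \subset B -> x \notin B ->
    f (x |: B) - f B <= f (x |: A) - f A.

Definition argmax_rule {W : finType} {R : realFieldType}
  (choose : {set W} -> (W -> R) -> W) :=
  forall (A : {set W}) (F : W -> R), A != set0 ->
    choose A F \in A /\ (forall w, w \in A -> F w <= F (choose A F)).

(* SeqGreedy allocation: Wr = remaining candidates W', S = selected users.
   Runs with fuel (#|W| steps suffice since each step removes a candidate).
   Returns the selected set on realization phi (only profiles of selected
   users are ever used, so the policy is adaptive). *)
Fixpoint seqGreedy {V W : finType} {R : realFieldType} (f : {set V} -> R)
  (O : {set {set V}}) (p : W -> {set V} -> R) (b : W -> R) (B : R)
  (choose : {set W} -> (W -> R) -> W) (phi : {ffun W -> {set V}})
  (n : nat) (Wr S : {set W}) : {set W} :=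
  match n with
  | 0 => S
  | n'.+1 =>
    if Wr == set0 then S else
    let ws := choose Wr (fun w => Delta f O p w S phi / b w) in
    if \sum_(s in S) b s + b ws <= B
    then seqGreedy f O p b B choose phi n' (Wr :\ ws) (ws |: S)
    else seqGreedy f O p b B choose phi n' (Wr :\ ws) S
  end.

(* SeqTGreedy allocation with parameter alpha; D = sum of the Delta_s recorded
   for the already selected users s (Delta_s = value of Delta at selection). *)
Fixpoint seqTGreedy {V W : finType} {R : realFieldType} (f : {set V} -> R)
  (O : {set {set V}}) (p : W -> {set V} -> R) (b : W -> R) (B alpha : R)
  (choose : {set W} -> (W -> R) -> W) (phi : {ffun W -> {set V}})
  (n : nat) (Wr S : {set W}) (D : R) : {set W} :=
  match n with
  | 0 => S
  | n'.+1 =>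
    if Wr == set0 then S else
    let ws := choose Wr (fun w => Delta f O p w S phi / b w) in
    let dws := Delta f O p ws S phi in
    if \sum_(s in S) b s + b ws <= B then
      if b ws <= B / alpha * (dws / (D + dws))
      then seqTGreedy f O p b B alpha choose phi n' (Wr :\ ws) (ws |: S) (D + dws)
      else S
    else seqTGreedy f O p b B alpha choose phi n' (Wr :\ ws) S D
  end.

Definition gavg {V W : finType} {R : realFieldType} (f : {set V} -> R)
  (p : W -> {set V} -> R) (sel : {ffun W -> {set V}} -> {set W}) : R :=
  \sum_(phi : {ffun W -> {set V}}) jointP p phi * gval f (sel phi) phi.

(* Main.v *)
Require Import Defs.
From mathcomp Require Import all_boot all_order all_algebra.
From mathcomp Require Import ring lra.
From Stdlib Require Import FunctionalExtensionality.
Set Implicit Arguments. Unset Strict Implicit. Unset Printing Implicit Defensive.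
Import Order.TTheory GRing.Theory Num.Theory.
Local Open Scope ring_scope.

Section Proof7.
Variables (V W : finType) (R : realFieldType)
  (f : {set V} -> R) (O : {set {set V}}) (p : W -> {set V} -> R)
  (c : W -> R) (B alpha fmax : R) (choose : {set W} -> (W -> R) -> W).
Hypothesis f_ge0 : forall A : {set V}, 0 <= f A.
Hypothesis f_mono : monotone_set f.
Hypothesis f_sub : submodular_set f.
Hypothesis p_ge0 : forall w y, 0 <= p w y.
Hypothesis p_sum1 : forall w, \sum_(y : {set V}) p w y = 1.
Hypothesis p_O : forall w y, y \notin O -> p w y = 0.
Hypothesis fmaxP : forall (S : {set W}) (phi : W -> {set V}) (y : {set V}),
     (forall s, phi s \in O) -> y \in O ->
     f ((\bigcup_(s in S) phi s) :|: y) - f (\bigcup_(s in S) phi s) <= fmax.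
Hypothesis c_gt0 : forall w, 0 < c w.
Hypothesis B_gt0 : 0 < B.
Hypothesis alpha_ge1 : 1 <= alpha.
Hypothesis chooseP : argmax_rule choose.

Local Notation jP := (jointP p).
Local Notation Dl := (Delta f O p).
Local Notation cost S := (\sum_(s in S) c s).

Lemma jP_ge0 (phi : {ffun W -> {set V}}) : 0 <= jP phi.
Proof. by apply: prodr_ge0 => w _; apply: p_ge0. Qed.

Lemma sum_forall (Q : W -> {set V} -> bool) :
  \sum_(psi : {ffun W -> {set V}} | [forall w, Q w (psi w)]) jP psi =
  \prod_w \sum_(y | Q w y) p w y.
Proof.
rewrite (eq_bigr (fun w => \sum_y (if Q w y then p w y else 0))); last first.
  by move=> w _; rewrite big_mkcond.
rewrite bigA_distr_bigA big_mkcond /=; apply: eq_bigr => psi _.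
case Hf: [forall w, Q w (psi w)].
  by rewrite /jointP; apply: eq_bigr => w _; rewrite (forallP Hf w).
move/negbT: Hf; rewrite negb_forall => /existsP [w Hw].
by rewrite (bigD1 w) //= (negbTE Hw) mul0r.
Qed.

Lemma sum_jP1 : \sum_(psi : {ffun W -> {set V}}) jP psi = 1.
Proof.
transitivity (\sum_(psi : {ffun W -> {set V}} | [forall w, (fun _ _ => true) w (psi w)]) jP psi).
  by apply: eq_bigl => psi; symmetry; apply/forallP.
rewrite (sum_forall (fun _ _ => true)) big1 // => w _; exact: p_sum1.
Qed.

Lemma agreeE S (phi psi : {ffun W -> {set V}}) :
  agree S phi psi = [forall w, (w \in S) ==> (psi w == phi w)].
Proof. by []. Qed.

Lemma indep (S : {set W}) (phi : {ffun W -> {set V}}) (w0 : W) (y : {set V}) : w0 \notin S ->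
  \sum_(psi | agree S phi psi && (psi w0 == y)) jP psi =
  p w0 y * \sum_(psi | agree S phi psi) jP psi.
Proof.
move=> Hw0.
rewrite (eq_bigl (fun psi : {ffun W -> {set V}} => [forall w, ((w \in S) ==> (psi w == phi w))
                                      && ((w == w0) ==> (psi w == y))])); last first.
  move=> psi; apply/andP/forallP.
    case=> /forallP H1 /eqP H2 w; rewrite H1 /=; apply/implyP => /eqP ->; exact/eqP.
  move=> H; split; first by apply/forallP => w; case/andP: (H w).
  by case/andP: (H w0); rewrite eqxx.
rewrite (sum_forall (fun w y' => ((w \in S) ==> (y' == phi w)) && ((w == w0) ==> (y' == y)))).
rewrite (eq_bigl (fun psi : {ffun W -> {set V}} => [forall w, (fun w y' => (w \in S) ==> (y' == phi w)) w (psi w)])) //.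
rewrite (sum_forall (fun w y' => (w \in S) ==> (y' == phi w))) (bigD1 w0) //= [in RHS](bigD1 w0) //=.
rewrite (negbTE Hw0) eqxx /= big_pred1_eq.
rewrite p_sum1 mul1r; congr (_ * _).
apply: eq_bigr => w Hw; apply: eq_bigl => y'.
by rewrite (negbTE Hw) andbT.
Qed.

Lemma Z_ge_jP (S : {set W}) (phi : {ffun W -> {set V}}) : jP phi <= \sum_(psi | agree S phi psi) jP psi.
Proof.
rewrite (bigD1 phi) /=; last by apply/forallP => w; apply/implyP.
by rewrite lerDl; apply: sumr_ge0 => ? _; exact: jP_ge0.
Qed.

Lemma jP_O (phi : {ffun W -> {set V}}) : 0 < jP phi -> forall w, phi w \in O.
Proof.
move=> Hp w; apply/negPn/negP => Hn.
by move: Hp; rewrite /jointP (bigD1 w) //= p_O // mul0r ltxx.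
Qed.

Lemma condP_indep (S : {set W}) (phi : {ffun W -> {set V}}) (w : W) (y : {set V}) : 0 < jP phi -> w \notin S ->
  condP p w y S phi = p w y.
Proof.
move=> Hp Hw; rewrite /condP indep // mulfK //.
by rewrite gt_eqF // (lt_le_trans Hp) // Z_ge_jP.
Qed.

Lemma condP_ge0 (S : {set W}) (phi : {ffun W -> {set V}}) (w : W) (y : {set V}) : 0 <= condP p w y S phi.
Proof.
by apply: divr_ge0; apply: sumr_ge0 => ? _; exact: jP_ge0.
Qed.

Lemma U_sub (S : {set W}) (phi : {ffun W -> {set V}}) w : w \in S ->
  phi w \subset \bigcup_(s in S) phi s.
Proof. by move=> Hw; apply: (bigcup_sup w). Qed.

Lemma Delta_in (S : {set W}) (phi : {ffun W -> {set V}}) (w : W) : w \in S -> Dl w S phi = 0.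
Proof.
move=> Hw; rewrite /Delta big1 // => y _.
case: (eqVneq y (phi w)) => [->|ne].
  by rewrite /gval (setUidPl (U_sub phi Hw)) subrr mulr0.
rewrite /condP big1 ?mul0r // => psi /andP [/forallP H /eqP E].
by move: (H w); rewrite Hw E /= (negbTE ne).
Qed.

Lemma Delta_ge0 (S : {set W}) (phi : {ffun W -> {set V}}) (w : W) : 0 <= Dl w S phi.
Proof.
apply: sumr_ge0 => y _; apply: mulr_ge0; first exact: condP_ge0.
by rewrite subr_ge0; apply: f_mono; apply: subsetUl.
Qed.

Lemma Delta_out (S : {set W}) (phi : {ffun W -> {set V}}) (w : W) : 0 < jP phi -> w \notin S ->
  Dl w S phi = \sum_(y in O) p w y * (f ((\bigcup_(s in S) phi s) :|: y) - f (\bigcup_(s in S) phi s)).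
Proof.
by move=> Hp Hw; apply: eq_bigr => y _; rewrite condP_indep.
Qed.

Lemma sumO w : \sum_(y in O) p w y = 1.
Proof.
rewrite -(p_sum1 w) [in RHS](bigID (fun y => y \in O)) /= [X in _ + X]big1 ?addr0 //.
by move=> y; apply: p_O.
Qed.

Lemma fmax_ge0 : 0 <= fmax.
Proof.
have w0 := choose set0 (fun _ => 0).
have [O0|[y0 Hy0]] := set_0Vmem O.
  by move: (sumO w0); rewrite O0 big_set0 => /eqP; rewrite eq_sym oner_eq0.
have H := @fmaxP set0 (fun _ => y0) y0 (fun _ => Hy0) Hy0; apply: le_trans H.
by rewrite subr_ge0; apply: f_mono; apply: subsetUl.
Qed.

Lemma Delta_le_fmax (S : {set W}) (phi : {ffun W -> {set V}}) (w : W) : 0 < jP phi -> Dl w S phi <= fmax.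
Proof.
move=> Hp; case Hw: (w \in S); first by rewrite Delta_in // fmax_ge0.
rewrite Delta_out ?Hw //.
apply: (@le_trans _ _ (\sum_(y in O) p w y * fmax)); last by rewrite -mulr_suml sumO mul1r.
apply: ler_sum => y Hy; apply: ler_wpM2l => //.
exact: (@fmaxP S (fun s => phi s) y (jP_O Hp) Hy).
Qed.


Lemma submod_sets (A B1 Y : {set V}) : A \subset B1 ->
  f (B1 :|: Y) - f B1 <= f (A :|: Y) - f A.
Proof.
move=> AB; move: {2}#|Y| (leqnn #|Y|) => n; elim: n Y => [|n IH] Y HY.
  move: HY; rewrite leqn0 cards_eq0 => /eqP ->; rewrite !setU0 !subrr //.
case: (set_0Vmem Y) => [->|[x Hx]]; first by rewrite !setU0 !subrr.
set Y' := Y :\ x.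
have HY' : (#|Y'| <= n)%N by move: HY; rewrite (cardsD1 x Y) Hx.
have EB : B1 :|: Y = x |: (B1 :|: Y') by rewrite setUCA setD1K.
have EA : A :|: Y = x |: (A :|: Y') by rewrite setUCA setD1K.
rewrite EB EA.
have H1 := IH Y' HY'.
have H2 : f (x |: (B1 :|: Y')) - f (B1 :|: Y') <= f (x |: (A :|: Y')) - f (A :|: Y').
  case Hb: (x \in B1 :|: Y').
    have -> : x |: (B1 :|: Y') = B1 :|: Y' by apply/setUidPr; rewrite sub1set.
    by rewrite subrr subr_ge0; apply: f_mono; apply: subsetUr.
  by apply: f_sub; [apply: setSU | rewrite Hb].
lra.
Qed.

Lemma agree_val (S : {set W}) (phi psi : {ffun W -> {set V}}) :
  agree S phi psi -> forall s, s \in S -> psi s = phi s.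
Proof. by move=> /forallP H s Hs; have := H s; rewrite Hs => /eqP. Qed.

Lemma agree_refl (S : {set W}) (phi : {ffun W -> {set V}}) : agree S phi phi.
Proof. by apply/forallP => s; apply/implyP. Qed.

Lemma agree_eq (S : {set W}) (phi psi : {ffun W -> {set V}}) :
  agree S phi psi -> agree S psi =1 agree S phi.
Proof.
move=> H x; apply: eq_forallb => s; case Hs: (s \in S) => //=.
by rewrite (agree_val H Hs).
Qed.

Lemma U_agree (S : {set W}) (phi psi : {ffun W -> {set V}}) :
  agree S phi psi -> \bigcup_(s in S) psi s = \bigcup_(s in S) phi s.
Proof. by move=> H; apply: eq_bigr => s Hs; rewrite (agree_val H Hs). Qed.

Lemma gval_agree (S : {set W}) (phi psi : {ffun W -> {set V}}) :
  agree S phi psi -> gval f S psi = gval f S phi.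
Proof. by move=> H; rewrite /gval (U_agree H). Qed.

Lemma Delta_agree (S : {set W}) (phi psi : {ffun W -> {set V}}) w :
  agree S phi psi -> Dl w S psi = Dl w S phi.
Proof.
move=> H; rewrite /Delta /gval (U_agree H); apply: eq_bigr => y _.
rewrite /condP; congr (_ / _ * _).
  by apply: eq_bigl => x; rewrite (agree_eq H).
by apply: eq_bigl => x; rewrite (agree_eq H).
Qed.

Lemma ws_agree (Wr S : {set W}) (phi psi : {ffun W -> {set V}}) :
  agree S phi psi ->
  choose Wr (fun w => Dl w S psi / c w) = choose Wr (fun w => Dl w S phi / c w).
Proof.
move=> H; congr (choose Wr _); apply: functional_extensionality => w.
by rewrite (Delta_agree w H).
Qed.

Lemma Delta_anti (S S' : {set W}) (phi : {ffun W -> {set V}}) w :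
  S \subset S' -> 0 < jP phi -> Dl w S' phi <= Dl w S phi.
Proof.
move=> HS Hp; case Hw: (w \in S'); first by rewrite Delta_in // Delta_ge0.
have Hw' : w \notin S by apply/negP => /(subsetP HS); rewrite Hw.
rewrite !Delta_out ?Hw //; apply: ler_sum => y _; apply: ler_wpM2l => //.
apply: submod_sets; apply/bigcupsP => s Hs; apply: (bigcup_sup s).
exact: (subsetP HS).
Qed.

Definition upd (phi : {ffun W -> {set V}}) (w : W) (y : {set V}) : {ffun W -> {set V}} :=
  [ffun x => if x == w then y else phi x].

Lemma agree_upd (S : {set W}) phi w y psi : w \notin S ->
  agree (w |: S) (upd phi w y) psi = agree S phi psi && (psi w == y).
Proof.
move=> Hw; apply/forallP/andP.
  move=> H; split.
    apply/forallP => s; apply/implyP => Hs.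
    have sw : (s == w) = false by apply/negbTE; apply: contraNneq Hw => <-.
    by have := H s; rewrite in_setU1 Hs orbT /= ffunE sw.
  by have := H w; rewrite in_setU1 eqxx /= ffunE eqxx.
case=> H1 H2 s; rewrite in_setU1 ffunE; case: eqP => [->|_] //=.
exact: (forallP H1 s).
Qed.

Lemma gval_upd (S : {set W}) phi w y : w \notin S ->
  gval f (w |: S) (upd phi w y) = f ((\bigcup_(s in S) phi s) :|: y).
Proof.
move=> Hw; rewrite /gval big_setU1 //= ffunE eqxx setUC; congr (f (_ :|: _)).
apply: eq_bigr => s Hs; rewrite ffunE.
by have -> : (s == w) = false by apply/negbTE; apply: contraNneq Hw => <-.
Qed.

Lemma part (S : {set W}) phi w (F : {ffun W -> {set V}} -> R) : w \notin S ->
  \sum_(psi | agree S phi psi) F psi =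
  \sum_(y : {set V}) \sum_(psi | agree (w |: S) (upd phi w y) psi) F psi.
Proof.
move=> Hw; rewrite (partition_big (fun psi : {ffun W -> {set V}} => psi w) predT) //.
by apply: eq_bigr => y _; apply: eq_bigl => psi; rewrite agree_upd.
Qed.

Lemma key (S : {set W}) (phi : {ffun W -> {set V}}) w :
  \sum_(psi | agree S phi psi) jP psi * (f ((\bigcup_(s in S) phi s) :|: psi w) - gval f S phi)
  = Dl w S phi * \sum_(psi | agree S phi psi) jP psi.
Proof.
set Z := \sum_(psi | agree S phi psi) jP psi.
set U := \bigcup_(s in S) phi s.
rewrite (partition_big (fun psi : {ffun W -> {set V}} => psi w) predT) //=.
rewrite (eq_bigr (fun y => (\sum_(psi | agree S phi psi && (psi w == y)) jP psi) *
                          (f (U :|: y) - gval f S phi))); last first.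
  move=> y _; rewrite big_distrl /=; apply: eq_bigr => psi /andP [_ /eqP ->] //.
have NO : forall y, y \notin O -> \sum_(psi | agree S phi psi && (psi w == y)) jP psi = 0.
  move=> y Hy; apply: big1 => psi /andP [_ /eqP E].
  by rewrite /jointP (bigD1 w) //= E p_O // mul0r.
rewrite (bigID (fun y => y \in O)) /= [X in _ + X]big1 ?addr0; last first.
  by move=> y Hy; rewrite NO // mul0r.
case: (eqVneq Z 0) => HZ.
  rewrite HZ mulr0; apply: big1 => y _.
  rewrite big1 ?mul0r // => psi /andP [Ha _].
  by apply: (psumr_eq0P _ HZ) => // ? _; exact: jP_ge0.
rewrite /Delta big_distrl /=; apply: eq_bigr => y _.
rewrite /condP -/Z /gval -/U; field.
exact: HZ.
Qed.

Lemma dis1 (Wr S : {set W}) x : Wr :&: S = set0 -> x \in Wr -> x \notin S.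
Proof.
move=> H Hx; apply/negP => Hs.
have : x \in Wr :&: S by rewrite inE Hx Hs.
by rewrite H inE.
Qed.

Lemma dis2 (Wr S : {set W}) x : Wr :&: S = set0 -> (Wr :\ x) :&: (x |: S) = set0.
Proof.
move=> H; apply/setP => y; rewrite !inE; case: (eqVneq y x) => //= _.
by move/setP: H => /(_ y); rewrite !inE.
Qed.

Lemma dis3 (Wr S : {set W}) x : Wr :&: S = set0 -> (Wr :\ x) :&: S = set0.
Proof.
move=> H; apply/setP => y; rewrite !inE; case: (eqVneq y x) => //= _.
by move/setP: H => /(_ y); rewrite !inE.
Qed.


Fixpoint gD (phi : {ffun W -> {set V}}) (n : nat) (Wr S : {set W}) (a : R) : R :=
  match n with
  | 0 => a
  | n'.+1 =>
    if Wr == set0 then a else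
    let ws := choose Wr (fun w => Dl w S phi / c w) in
    if \sum_(s in S) c s + c ws <= B
    then gD phi n' (Wr :\ ws) (ws |: S) (a + Dl ws S phi)
    else gD phi n' (Wr :\ ws) S a
  end.

Fixpoint tgD (phi : {ffun W -> {set V}}) (n : nat) (Wr S : {set W}) (D : R) : R :=
  match n with
  | 0 => D
  | n'.+1 =>
    if Wr == set0 then D else
    let ws := choose Wr (fun w => Dl w S phi / c w) in
    let dws := Dl ws S phi in
    if \sum_(s in S) c s + c ws <= B then
      if c ws <= B / alpha * (dws / (D + dws))
      then tgD phi n' (Wr :\ ws) (ws |: S) (D + dws)
      else D
    else tgD phi n' (Wr :\ ws) S D
  end.

Local Notation sG := (seqGreedy f O p c B choose).
Local Notation sT := (seqTGreedy f O p c B alpha choose).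

Section Steps.
Variables (n : nat) (Wr S : {set W}) (phi psi : {ffun W -> {set V}}) (a : R).
Hypothesis Hag : agree S phi psi.
Hypothesis Hne : Wr != set0.
Let ws := choose Wr (fun w => Dl w S phi / c w).
Let d := Dl ws S phi.

Lemma G_stepA : cost S + c ws <= B ->
  sG psi n.+1 Wr S = sG psi n (Wr :\ ws) (ws |: S) /\
  gD psi n.+1 Wr S a = gD psi n (Wr :\ ws) (ws |: S) (a + d).
Proof.
by move=> Hb; rewrite /= (negbTE Hne) (ws_agree Wr Hag) -/ws (Delta_agree ws Hag) Hb.
Qed.

Lemma G_stepB : ~~ (cost S + c ws <= B) ->
  sG psi n.+1 Wr S = sG psi n (Wr :\ ws) S /\
  gD psi n.+1 Wr S a = gD psi n (Wr :\ ws) S a.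
Proof.
by move=> Hb; rewrite /= (negbTE Hne) (ws_agree Wr Hag) -/ws (negbTE Hb).
Qed.

Lemma T_stepA : cost S + c ws <= B -> c ws <= B / alpha * (d / (a + d)) ->
  sT psi n.+1 Wr S a = sT psi n (Wr :\ ws) (ws |: S) (a + d) /\
  tgD psi n.+1 Wr S a = tgD psi n (Wr :\ ws) (ws |: S) (a + d).
Proof.
by move=> Hb Ht; rewrite /= (negbTE Hne) (ws_agree Wr Hag) -/ws (Delta_agree ws Hag) Hb -/d Ht.
Qed.

Lemma T_stepC : cost S + c ws <= B -> ~~ (c ws <= B / alpha * (d / (a + d))) ->
  sT psi n.+1 Wr S a = S /\ tgD psi n.+1 Wr S a = a.
Proof.
by move=> Hb Ht; rewrite /= (negbTE Hne) (ws_agree Wr Hag) -/ws (Delta_agree ws Hag) Hb -/d (negbTE Ht).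
Qed.

Lemma T_stepB : ~~ (cost S + c ws <= B) ->
  sT psi n.+1 Wr S a = sT psi n (Wr :\ ws) S a /\
  tgD psi n.+1 Wr S a = tgD psi n (Wr :\ ws) S a.
Proof.
by move=> Hb; rewrite /= (negbTE Hne) (ws_agree Wr Hag) -/ws (negbTE Hb).
Qed.

End Steps.


Lemma ws_in (Wr S : {set W}) phi : Wr != set0 ->
  choose Wr (fun w => Dl w S phi / c w) \in Wr /\
  forall w, w \in Wr -> Dl w S phi / c w <= Dl (choose Wr (fun w => Dl w S phi / c w)) S phi / c (choose Wr (fun w => Dl w S phi / c w)).
Proof. by move=> H; have [] := chooseP (fun w => Dl w S phi / c w) H. Qed.

Lemma mart_core (S : {set W}) (phi0 : {ffun W -> {set V}}) ws (a d : R)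
  (X : {ffun W -> {set V}} -> R) : ws \notin S -> d = Dl ws S phi0 ->
  (forall y, \sum_(psi | agree (ws |: S) (upd phi0 ws y) psi) jP psi * X psi =
             \sum_(psi | agree (ws |: S) (upd phi0 ws y) psi)
                jP psi * (gval f (ws |: S) (upd phi0 ws y) - (a + d))) ->
  \sum_(psi | agree S phi0 psi) jP psi * X psi =
  \sum_(psi | agree S phi0 psi) jP psi * (gval f S phi0 - a).
Proof.
move=> wsS -> IH.
set U := \bigcup_(s in S) phi0 s.
transitivity (\sum_(psi | agree S phi0 psi) jP psi * (f (U :|: psi ws) - (a + Dl ws S phi0))).
  rewrite (part _ _ wsS) [RHS](part _ _ wsS); apply: eq_bigr => y _.
  rewrite IH gval_upd //; apply: eq_bigr => psi.
  by rewrite agree_upd // => /andP [_ /eqP ->].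
have K := key S phi0 ws.
rewrite (eq_bigr (fun psi => jP psi * (f (U :|: psi ws) - gval f S phi0) +
           (jP psi * (gval f S phi0 - a) - Dl ws S phi0 * jP psi))); last first.
  by move=> psi _; ring.
rewrite big_split /= K sumrB -mulr_sumr; ring.
Qed.

Lemma mart_G n : forall (Wr S : {set W}) (a : R) (phi0 : {ffun W -> {set V}}),
  Wr :&: S = set0 ->
  \sum_(psi | agree S phi0 psi) jP psi * (gval f (sG psi n Wr S) psi - gD psi n Wr S a)
  = \sum_(psi | agree S phi0 psi) jP psi * (gval f S phi0 - a).
Proof.
elim: n => [|n IH] Wr S a phi0 Hdis.
  by apply: eq_bigr => psi Hag /=; rewrite (gval_agree Hag).
case: (eqVneq Wr set0) => [->|Hne].
  by apply: eq_bigr => psi Hag /=; rewrite eqxx (gval_agree Hag).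
have [wsW _] := ws_in S phi0 Hne.
set ws := choose Wr (fun w => Dl w S phi0 / c w) in wsW *.
have wsS := dis1 Hdis wsW.
case Hb: (cost S + c ws <= B).
  rewrite (eq_bigr (fun psi => jP psi * (gval f (sG psi n (Wr :\ ws) (ws |: S)) psi
                                - gD psi n (Wr :\ ws) (ws |: S) (a + Dl ws S phi0)))); last first.
    by move=> psi Hag; have [-> ->] := G_stepA n a Hag Hne Hb.
  apply: (mart_core wsS (erefl _)) => y.
  by apply: IH; apply: dis2.
rewrite (eq_bigr (fun psi => jP psi * (gval f (sG psi n (Wr :\ ws) S) psi
                                - gD psi n (Wr :\ ws) S a))); last first.
  by move=> psi Hag; have [-> ->] := G_stepB n a Hag Hne (negbT Hb).
by apply: IH; apply: dis3.
Qed.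

Lemma mart_T n : forall (Wr S : {set W}) (D : R) (phi0 : {ffun W -> {set V}}),
  Wr :&: S = set0 ->
  \sum_(psi | agree S phi0 psi) jP psi * (gval f (sT psi n Wr S D) psi - tgD psi n Wr S D)
  = \sum_(psi | agree S phi0 psi) jP psi * (gval f S phi0 - D).
Proof.
elim: n => [|n IH] Wr S D phi0 Hdis.
  by apply: eq_bigr => psi Hag /=; rewrite (gval_agree Hag).
case: (eqVneq Wr set0) => [->|Hne].
  by apply: eq_bigr => psi Hag /=; rewrite eqxx (gval_agree Hag).
have [wsW _] := ws_in S phi0 Hne.
set ws := choose Wr (fun w => Dl w S phi0 / c w) in wsW *.
have wsS := dis1 Hdis wsW.
case Hb: (cost S + c ws <= B).
  case Ht: (c ws <= B / alpha * (Dl ws S phi0 / (D + Dl ws S phi0))).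
    rewrite (eq_bigr (fun psi => jP psi * (gval f (sT psi n (Wr :\ ws) (ws |: S) (D + Dl ws S phi0)) psi
                                  - tgD psi n (Wr :\ ws) (ws |: S) (D + Dl ws S phi0)))); last first.
      by move=> psi Hag; have [-> ->] := T_stepA n Hag Hne Hb Ht.
    apply: (mart_core wsS (erefl _)) => y.
    by apply: IH; apply: dis2.
  apply: eq_bigr => psi Hag.
  by have [-> ->] := T_stepC n Hag Hne Hb (negbT Ht); rewrite (gval_agree Hag).
rewrite (eq_bigr (fun psi => jP psi * (gval f (sT psi n (Wr :\ ws) S D) psi
                                - tgD psi n (Wr :\ ws) S D))); last first.
  by move=> psi Hag; have [-> ->] := T_stepB n D Hag Hne (negbT Hb).
by apply: IH; apply: dis3.
Qed.


Lemma cost_ge0 (S : {set W}) : 0 <= cost S.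
Proof. by apply: sumr_ge0 => s _; apply: ltW. Qed.

Lemma tail (phi : {ffun W -> {set V}}) (Hp : 0 < jP phi) n :
  forall (Wr S : {set W}) (a r : R),
  Wr :&: S = set0 -> cost S <= B -> 0 <= r ->
  (forall w, w \in Wr -> Dl w S phi / c w <= r) ->
  gD phi n Wr S a - a <= r * (B - cost S).
Proof.
elim: n => [|n IH] Wr S a r Hdis HB Hr Hrat.
  by rewrite /= subrr; apply: mulr_ge0; rewrite // subr_ge0.
case: (eqVneq Wr set0) => [->|Hne].
  by rewrite /= eqxx subrr; apply: mulr_ge0; rewrite // subr_ge0.
have [wsW _] := ws_in S phi Hne.
set ws := choose Wr (fun w => Dl w S phi / c w) in wsW *.
have wsS := dis1 Hdis wsW.
have Hc := c_gt0 ws.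
case Hb: (cost S + c ws <= B).
  have [_ ->] := G_stepA n a (agree_refl S phi) Hne Hb.
  rewrite -/ws.
  have H1 : Dl ws S phi <= r * c ws by rewrite -ler_pdivrMr // Hrat.
  have H2 := IH (Wr :\ ws) (ws |: S) (a + Dl ws S phi) r (dis2 _ Hdis).
  rewrite big_setU1 //= in H2.
  have H3 : gD phi n (Wr :\ ws) (ws |: S) (a + Dl ws S phi) - (a + Dl ws S phi)
            <= r * (B - (c ws + cost S)).
    apply: H2 => //; first by rewrite addrC.
    move=> w; rewrite inE => /andP [_ Hw].
    apply: le_trans (Hrat w Hw).
    rewrite ler_pM2r ?invr_gt0 //; apply: Delta_anti => //; exact: subsetUr.
  have E : r * (B - cost S) = r * (B - (c ws + cost S)) + r * c ws by ring.
  rewrite E; lra.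
have [_ ->] := G_stepB n a (agree_refl S phi) Hne (negbT Hb).
apply: IH => //; first exact: dis3.
by move=> w; rewrite inE => /andP [_ Hw]; apply: Hrat.
Qed.

Lemma alg (D d cw : R) : 0 <= D -> 0 < d -> 0 < cw ->
  ~~ (cw <= B / alpha * (d / (D + d))) -> B * (d / cw) <= alpha * (D + d).
Proof.
move=> HD Hd Hc Ht.
have Ha : 0 < alpha by have := alpha_ge1; lra.
have Hx : 0 < D + d by lra.
rewrite -ltNge in Ht.
have E : B / alpha * (d / (D + d)) = (B * d) / (alpha * (D + d)).
  by field; apply/andP; split; rewrite gt_eqF.
rewrite E ltr_pdivrMr ?mulr_gt0 // in Ht.
rewrite mulrA ler_pdivrMr //; lra.
Qed.

Lemma sync (phi : {ffun W -> {set V}}) (Hp : 0 < jP phi) n :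
  forall (Wr S : {set W}) (a D : R),
  Wr :&: S = set0 -> cost S <= B -> 0 <= D ->
  gD phi n Wr S a - a <= (1 + alpha) * (tgD phi n Wr S D - D) + alpha * D + alpha * fmax.
Proof.
have Hf := fmax_ge0. have Ha1 := alpha_ge1.
elim: n => [|n IH] Wr S a D Hdis HB HD.
  rewrite /= !subrr mulr0 add0r; apply: addr_ge0; apply: mulr_ge0 => //; lra.
case: (eqVneq Wr set0) => [->|Hne].
  rewrite /= eqxx !subrr mulr0 add0r; apply: addr_ge0; apply: mulr_ge0 => //; lra.
have [wsW Hmax] := ws_in S phi Hne.
set ws := choose Wr (fun w => Dl w S phi / c w) in wsW Hmax *.
have wsS := dis1 Hdis wsW.
have Hc := c_gt0 ws.
have Hd0 := Delta_ge0 S phi ws.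
case Hb: (cost S + c ws <= B).
  case Ht: (c ws <= B / alpha * (Dl ws S phi / (D + Dl ws S phi))).
    have [_ ->] := G_stepA n a (agree_refl S phi) Hne Hb.
    have [_ ->] := T_stepA n (agree_refl S phi) Hne Hb Ht.
    rewrite -/ws.
    have H := IH (Wr :\ ws) (ws |: S) (a + Dl ws S phi) (D + Dl ws S phi) (dis2 _ Hdis).
    rewrite big_setU1 //= addrC in H.
    have := H Hb (addr_ge0 HD Hd0).
    set G := gD _ _ _ _ _; set T := tgD _ _ _ _ _ => H'.
    have E1 : (1 + alpha) * (T - (D + Dl ws S phi)) = (1 + alpha) * (T - D) - (1 + alpha) * Dl ws S phi by ring.
    have E2 : alpha * (D + Dl ws S phi) = alpha * D + alpha * Dl ws S phi by ring.
    rewrite E1 E2 in H'.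
    have E3 : (1 + alpha) * Dl ws S phi = Dl ws S phi + alpha * Dl ws S phi by ring.
    rewrite E3 in H'; lra.
  have [_ ->] := G_stepA n a (agree_refl S phi) Hne Hb.
  have [_ ->] := T_stepC n (agree_refl S phi) Hne Hb (negbT Ht).
  rewrite -/ws subrr mulr0 add0r.
  set d := Dl ws S phi in Ht Hd0 Hmax *.
  set r := d / c ws.
  have Hr : 0 <= r by apply: divr_ge0 => //; apply: ltW.
  have H1 : d = r * c ws by rewrite /r mulfVK // gt_eqF.
  have H2 := tail Hp n (a + d) (dis2 ws Hdis).
  rewrite big_setU1 //= in H2.
  have H3 : gD phi n (Wr :\ ws) (ws |: S) (a + d) - (a + d) <= r * (B - (c ws + cost S)).
    apply: H2 => //; first by rewrite addrC.
    move=> w; rewrite inE => /andP [_ Hw].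
    apply: le_trans (Hmax w Hw).
    rewrite ler_pM2r ?invr_gt0 //; apply: Delta_anti => //; exact: subsetUr.
  have H4 : r * (B - (c ws + cost S)) + d <= r * B.
    rewrite H1; have := cost_ge0 S; have := mulr_ge0 Hr (cost_ge0 S); lra.
  have H5 : r * B <= alpha * D + alpha * fmax.
    have Hdf : d <= fmax by apply: Delta_le_fmax.
    have Ha : 0 <= alpha by lra.
    have := ler_wpM2l Ha Hdf.
    case: (eqVneq d 0) => [d0|dn0].
      rewrite /r d0 mul0r mul0r; have := mulr_ge0 Ha HD; lra.
    have Hdp : 0 < d by rewrite lt_def dn0.
    have := alg HD Hdp Hc (negbT Ht); rewrite mulrC -/r; lra.
  lra.
have [_ ->] := G_stepB n a (agree_refl S phi) Hne (negbT Hb).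
have [_ ->] := T_stepB n D (agree_refl S phi) Hne (negbT Hb).
by apply: IH => //; apply: dis3.
Qed.


Lemma main :
  gavg f p (fun phi => sG phi #|W| [set: W] set0)
  <= (1 + alpha) * gavg f p (fun phi => sT phi #|W| [set: W] set0 0) + alpha * fmax.
Proof.
set phi0 := [ffun _ : W => (set0 : {set V})].
have A0 : forall psi, agree set0 phi0 psi = true.
  by move=> psi; apply/forallP => s; rewrite in_set0.
have Hdis : [set: W] :&: set0 = set0 by rewrite setI0.
set g0 := gval f set0 phi0.
have Hg0 : 0 <= g0 by apply: f_ge0.
have MG : \sum_psi jP psi * gval f (sG psi #|W| [set: W] set0) psi
          - \sum_psi jP psi * gD psi #|W| [set: W] set0 0 = g0.
  have := mart_G #|W| 0 phi0 Hdis.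
  rewrite !(eq_bigl _ _ A0) -big_distrl /= sum_jP1 subr0 mul1r -/g0 => <-.
  by rewrite -sumrB; apply: eq_bigr => psi _; rewrite mulrBr.
have MT : \sum_psi jP psi * gval f (sT psi #|W| [set: W] set0 0) psi
          - \sum_psi jP psi * tgD psi #|W| [set: W] set0 0 = g0.
  have := mart_T #|W| 0 phi0 Hdis.
  rewrite !(eq_bigl _ _ A0) -big_distrl /= sum_jP1 subr0 mul1r -/g0 => <-.
  by rewrite -sumrB; apply: eq_bigr => psi _; rewrite mulrBr.
have Hc0 : cost (set0 : {set W}) <= B by rewrite big_set0 ltW.
set T := fun psi => tgD psi #|W| [set: W] set0 0.
have E : \sum_psi jP psi * ((1 + alpha) * T psi + alpha * fmax) =
         (1 + alpha) * \sum_psi jP psi * T psi + alpha * fmax.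
  rewrite (eq_bigr (fun psi => (1 + alpha) * (jP psi * T psi) + jP psi * (alpha * fmax))); last first.
    by move=> psi _; ring.
  by rewrite big_split /= -mulr_sumr -big_distrl /= sum_jP1 mul1r.
have SY : \sum_psi jP psi * gD psi #|W| [set: W] set0 0 <=
          (1 + alpha) * \sum_psi jP psi * T psi + alpha * fmax.
  rewrite -E; apply: ler_sum => psi _; have := jP_ge0 psi; rewrite le_eqVlt => /orP [/eqP <-|Hp].
    by rewrite !mul0r.
  have := sync Hp #|W| 0 Hdis Hc0 (lexx 0).
  rewrite !subr0 mulr0 addr0 => H.
  by rewrite /T; apply: ler_wpM2l => //; exact: ltW.
rewrite /gavg /=. rewrite /T /= in SY.
have Ha : 0 <= alpha by have := alpha_ge1; lra.
have := mulr_ge0 Ha Hg0.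
move: MG MT SY.
set Gs := \sum_phi _ * gval f (sG _ _ _ _) _.
set Ts := \sum_phi _ * gval f (sT _ _ _ _ _) _.
set SG := \sum_phi _ * gD _ _ _ _ _.
set ST := \sum_phi _ * tgD _ _ _ _ _.
move=> MG MT SY Hag.
have -> : Ts = ST + g0 by lra.
rewrite mulrDr [(1 + alpha) * g0]mulrDl mul1r.
lra.
Qed.

End Proof7.

Theorem lemma7 (V W : finType) (R : realFieldType)
  (f : {set V} -> R) (O : {set {set V}}) (p : W -> {set V} -> R)
  (c : W -> R) (B alpha fmax : R) (choose : {set W} -> (W -> R) -> W) :
  (forall A : {set V}, 0 <= f A) ->
  monotone_set f -> submodular_set f ->
  (forall w y, 0 <= p w y) ->
  (forall w, \sum_(y : {set V}) p w y = 1) ->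
  (forall w y, y \notin O -> p w y = 0) ->
  (forall (S : {set W}) (phi : W -> {set V}) (y : {set V}),
     (forall s, phi s \in O) -> y \in O ->
     f ((\bigcup_(s in S) phi s) :|: y) - f (\bigcup_(s in S) phi s) <= fmax) ->
  (forall w, 0 < c w) -> 0 < B -> 1 <= alpha ->
  argmax_rule choose ->
  (* users bid their true costs: b = c *)
  gavg f p (fun phi => seqGreedy f O p c B choose phi #|W| [set: W] set0)
  <= (1 + alpha) *
       gavg f p (fun phi => seqTGreedy f O p c B alpha choose phi #|W| [set: W] set0 0)
     + alpha * fmax.
Proof.
exact: main.
Qed.
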